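(* Consider a series system of two components $c_1,c_2$ (so $\phi(s)=1$ iff $s_1=s_2=1$) with independent states, perfect inspections ($y_k=s_k$), equal repair costs $C_{R,1}=C_{R,2}=C_R$ and $0\le C_R\le C_F/2$. Then for $\{i,j\}=\{1,2\}$, $$L^L_\omega(i)=p_iC_R+\min\{C_R,\;p_jC_F\}.$$ Moreover, if both $p_1$ and $p_2$ are at most $\tilde p=C_R/C_F$, then the component with the larger marginal failure probability has the (weakly) larger local value of information: $p_i\ge p_j\Rightarrow \mathrm{VoI}_L(i)\ge\mathrm{VoI}_L(j)$.
   Context: Components $c_1,c_2$ have binary states $s_k\in\{0,1\}$ ($1$: working, $0$: failed) with marginal failure probabilities $p_k=\mathbb{P}[s_k=0]$; $C_F>0$ is the cost of system failure. Local metric: an action is $A=(a_1,a_2)\in\{0,1\}^2$ ($a_k=1$: replace $c_k$); replacement is perfect, so the post-action state has $s'_k=1$ if $a_k=1$ and $s'_k=s_k$ otherwise. The loss is $\mathcal{L}(s',A)=C_F(1-\phi(s'))+\sum_k a_kC_{R,k}$. The prior loss is $L^L_\pi=\min_A\mathbb{E}[\mathcal{L}(s',A)]$; inspecting $c_i$ gives observation $y_i$, with posterior loss $L^L_{\omega|y_i=c}=\min_A\mathbb{E}[\mathcal{L}(s',A)\mid y_i=c]$ and expected posterior loss $L^L_\omega(i)=\mathbb{P}[y_i=0]L^L_{\omega|y_i=0}+\mathbb{P}[y_i=1]L^L_{\omega|y_i=1}$ (terms with zero probability omitted); $\mathrm{VoI}_L(i)=L^L_\pi-L^L_\omega(i)$.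 *)

(* Defs.v *)
From HB Require Import structures.
From mathcomp Require Import all_boot all_order all_algebra.
Set Implicit Arguments. Unset Strict Implicit. Unset Printing Implicit Defensive.
Import Order.TTheory GRing.Theory Num.Theory.
Local Open Scope ring_scope.

(* component states: true = working (s_k = 1), false = failed (s_k = 0) *)
Definition state := {ffun 'I_2 -> bool}.
(* actions: a k = true means replace component k *)
Definition action := {ffun 'I_2 -> bool}.

Definition phi_series (s : state) : bool := [forall k, s k].

Definition post (s : state) (A : action) : state := [ffun k => A k || s k].

Section Loc.
Variable R : realFieldType.

Definition loss (phi : state -> bool) (CF : R) (CRk : 'I_2 -> R)
    (s' : state) (A : action) : R :=
  CF * (1 - (phi s')%:R) + \sum_(k < 2) (A k)%:R * CRk k.

Definition probS (p : 'I_2 -> R) (s : state) : R :=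
  \prod_(k < 2) (if s k then 1 - p k else p k).

Definition minA (f : action -> R) : R :=
  \big[Num.min/f [ffun => false]]_(A : action) f A.

Definition Eloss_on phi CF CRk p (E : pred state) (A : action) : R :=
  \sum_(s : state | E s) probS p s * loss phi CF CRk (post s A) A.

Definition L_prior phi CF CRk p : R := minA (Eloss_on phi CF CRk p predT).

(* perfect inspection: y_i = s_i. P[y_i = c] *)
Definition prob_obs p (i : 'I_2) (c : bool) : R :=
  \sum_(s : state | s i == c) probS p s.

Definition L_post_given phi CF CRk p (i : 'I_2) (c : bool) : R :=
  minA (fun A => Eloss_on phi CF CRk p (fun s => s i == c) A / prob_obs p i c).

(* expected posterior loss; zero-probability terms omitted *)
Definition L_omega phi CF CRk p (i : 'I_2) : R :=
  \sum_(c : bool | prob_obs p i c != 0)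
     prob_obs p i c * L_post_given phi CF CRk p i c.

Definition VoI_L phi CF CRk p (i : 'I_2) : R :=
  L_prior phi CF CRk p - L_omega phi CF CRk p i.

End Loc.

(* Main.v *)
Require Import Defs.
From HB Require Import structures.
From mathcomp Require Import all_boot all_order all_algebra.
From mathcomp Require Import ring lra.
Import Order.TTheory GRing.Theory Num.Theory.
Local Open Scope ring_scope.

Definition k0 : 'I_2 := @Ordinal 2 0 isT.
Definition k1 : 'I_2 := @Ordinal 2 1 isT.
Definition f2 (a b : bool) : {ffun 'I_2 -> bool} :=
  [ffun k : 'I_2 => if val k == 0%N then a else b].

Lemma f2E0 a b : f2 a b k0 = a. Proof. by rewrite ffunE. Qed.
Lemma f2E1 a b : f2 a b k1 = b. Proof. by rewrite ffunE. Qed.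

Lemma ord2 (k : 'I_2) : k = k0 \/ k = k1.
Proof. case: k => [[|[|m]] Hm]; [left|right|]; try exact: val_inj. by []. Qed.

Lemma ffun2 (s : {ffun 'I_2 -> bool}) : s = f2 (s k0) (s k1).
Proof. apply/ffunP => k; case: (ord2 k) => ->; by rewrite ?f2E0 ?f2E1. Qed.

Lemma lift00 : lift ord0 (ord0 : 'I_1) = k1. Proof. exact: val_inj. Qed.
Lemma ord0E : (ord0 : 'I_2) = k0. Proof. exact: val_inj. Qed.

Lemma phiE s : phi_series s = s k0 && s k1.
Proof.
apply/forallP/andP => [H|[H0 H1] k]; first by split; apply: H.
by case: (ord2 k) => ->.
Qed.

Section S.
Variable R : realFieldType.

Lemma sum_state (F : state -> R) :
  \sum_(s : state) F s = F (f2 true true) + F (f2 true false)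
                       + F (f2 false true) + F (f2 false false).
Proof.
rewrite (reindex (fun ab : bool * bool => f2 ab.1 ab.2)) /=; last first.
  apply: onW_bij; exists (fun s : state => (s k0, s k1)).
    by case=> a b /=; rewrite f2E0 f2E1.
  by move=> s /=; rewrite -ffun2.
rewrite -(pair_bigA _ (fun a b => F (f2 a b))) /= !big_bool /=.
by rewrite addrA.
Qed.

Lemma probS_E (p : 'I_2 -> R) s :
  probS p s = (if s k0 then 1 - p k0 else p k0) * (if s k1 then 1 - p k1 else p k1).
Proof. by rewrite /probS big_ord_recl big_ord1 lift00 ord0E. Qed.

Lemma lossE (CF CR : R) s A :
  loss phi_series CF (fun _ => CR) s A
  = CF * (1 - (s k0 && s k1)%:R) + (A k0)%:R * CR + (A k1)%:R * CR.
Proof. by rewrite /loss phiE big_ord_recl big_ord1 lift00 ord0E addrA. Qed.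

Lemma bigmin_le (T : eqType) (r : seq T) (F : T -> R) x0 x :
  x \in r -> \big[Num.min/x0]_(y <- r) F y <= F x.
Proof.
elim: r => // y r IH; rewrite in_cons big_cons ge_min.
case/orP => [/eqP ->|/IH ->]; last by rewrite orbT.
by rewrite lexx.
Qed.

Lemma minA_ex (f : action -> R) : exists A, Defs.minA f = f A.
Proof.
rewrite /Defs.minA; apply: (big_rec (fun x => exists A, x = f A)).
  by exists [ffun => false].
move=> A x _ [B ->]; rewrite minElt; case: ifP => _; by eexists.
Qed.

Lemma minA4 (f : action -> R) :
  Defs.minA f = Num.min (Num.min (f (f2 true true)) (f (f2 true false)))
                   (Num.min (f (f2 false true)) (f (f2 false false))).
Proof.
apply/le_anti/andP; split.
  by rewrite !le_min !bigmin_le ?mem_index_enum.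
have [A ->] := minA_ex f; rewrite (ffun2 A).
by case: (A k0); case: (A k1); rewrite !ge_min lexx ?orbT.
Qed.

Lemma eq_minA (f g : action -> R) : f =1 g -> Defs.minA f = Defs.minA g.
Proof. by move=> H; rewrite /Defs.minA H; apply: eq_bigr. Qed.

End S.

Section S2.
Variable R : realFieldType.
Lemma sum_cond (E : pred state) (F : state -> R) :
  \sum_(s | E s) F s =
    (if E (f2 true true) then F (f2 true true) else 0)
  + (if E (f2 true false) then F (f2 true false) else 0)
  + (if E (f2 false true) then F (f2 false true) else 0)
  + (if E (f2 false false) then F (f2 false false) else 0).
Proof. by rewrite big_mkcond sum_state. Qed.
End S2.

Section M.
Variables (R : realFieldType) (CF CR : R) (p : 'I_2 -> R).

Definition hfun (pj : R) (ai aj c : bool) : R :=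
  (1 - pj) * (CF * (1 - (ai || c)%:R) + ai%:R * CR + aj%:R * CR)
  + pj * (CF * (1 - ((ai || c) && aj)%:R) + ai%:R * CR + aj%:R * CR).

Definition qv (i : 'I_2) (c : bool) := if c then 1 - p i else p i.

Lemma Eloss_k0 c A :
  Eloss_on phi_series CF (fun _ => CR) p (fun s => s k0 == c) A
  = qv k0 c * hfun (p k1) (A k0) (A k1) c.
Proof.
rewrite /Eloss_on /qv /hfun sum_cond /= ?f2E0 ?f2E1 /= !probS_E !lossE /post !ffunE /= ?f2E0 ?f2E1 /=.
case: c; case: (A k0); case: (A k1) => /=; rewrite ?mulr1n ?mulr0n; ring.
Qed.

Lemma Eloss_k1 c A :
  Eloss_on phi_series CF (fun _ => CR) p (fun s => s k1 == c) A
  = qv k1 c * hfun (p k0) (A k1) (A k0) c.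
Proof.
rewrite /Eloss_on /qv /hfun sum_cond /= ?f2E0 ?f2E1 /= !probS_E !lossE /post !ffunE /= ?f2E0 ?f2E1 /=.
case: c; case: (A k0); case: (A k1) => /=; rewrite ?mulr1n ?mulr0n; ring.
Qed.

Lemma qv_k0 c : prob_obs p k0 c = qv k0 c.
Proof.
rewrite /prob_obs /qv sum_cond /= ?f2E0 ?f2E1 /= !probS_E ?f2E0 ?f2E1 /=.
case: c => /=; ring.
Qed.

Lemma qv_k1 c : prob_obs p k1 c = qv k1 c.
Proof.
rewrite /prob_obs /qv sum_cond /= ?f2E0 ?f2E1 /= !probS_E ?f2E0 ?f2E1 /=.
case: c => /=; ring.
Qed.

Lemma min4_eq (a b c d v : R) : v <= a -> v <= b -> v <= c -> v <= d ->
  [\/ v = a, v = b, v = c | v = d] ->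
  Num.min (Num.min a b) (Num.min c d) = v.
Proof.
move=> ha hb hc hd H; apply/le_anti/andP; split; last by rewrite !le_min ha hb hc hd.
by case: H => ->; rewrite !ge_min lexx ?orbT.
Qed.

Definition Mv (pj : R) (c : bool) :=
  if c then Num.min CR (pj * CF) else CR + Num.min CR (pj * CF).

Lemma post_val (i j : 'I_2) c :
  0 < CF -> 0 <= CR -> CR <= CF / 2 -> (forall k, 0 <= p k <= 1) ->
  (i = k0 /\ j = k1) \/ (i = k1 /\ j = k0) ->
  prob_obs p i c * L_post_given phi_series CF (fun _ => CR) p i c
  = prob_obs p i c * Mv (p j) c.
Proof.
move=> hF hR hRF hp hij.
have [Eq Eh] : prob_obs p i c = qv i c /\
   forall A, Eloss_on phi_series CF (fun _ => CR) p (fun s => s i == c) A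
        = qv i c * hfun (p j) (A i) (A j) c.
  by case: hij => [[-> ->]|[-> ->]]; split; [exact: qv_k0|exact: Eloss_k0|exact: qv_k1|exact: Eloss_k1].
rewrite Eq; have [->|qn0] := eqVneq (qv i c) 0; first by rewrite !mul0r.
congr (_ * _).
rewrite /L_post_given (@eq_minA R _ (fun A : action => hfun (p j) (A i) (A j) c)); last first.
  by move=> A; rewrite Eh Eq mulrC mulKf.
have Hij : (i == k0) && (j == k1) || (i == k1) && (j == k0).
  by case: hij => [[-> ->]|[-> ->]].
rewrite minA4 /Mv /hfun.
move: (hp k0) (hp k1) => /andP[a0 a1] /andP[b0 b1].
clear Eh hp.
case/orP: Hij => /andP[/eqP -> /eqP ->]; rewrite ?f2E0 ?f2E1;
case: (leP CR (_ * CF)) => h;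
clear Eq qn0 hij; case: c => /=; apply: min4_eq; try nra;
first [apply: Or41; ring|apply: Or42; ring|apply: Or43; ring|apply: Or44; ring].
Qed.
End M.

Lemma ifq (R : realFieldType) (q x : R) : (if q != 0 then q * x else 0) = q * x.
Proof. by case: eqVneq => [->|]; rewrite ?mul0r. Qed.

Lemma Lomega_val (R : realFieldType) (CF CR : R) (p : 'I_2 -> R) (i j : 'I_2) :
  0 < CF -> 0 <= CR -> CR <= CF / 2 -> (forall k, 0 <= p k <= 1) -> i != j ->
  L_omega phi_series CF (fun _ => CR) p i = p i * CR + Num.min CR (p j * CF).
Proof.
move=> hF hR hRF hp ij.
have hij : (i = k0 /\ j = k1) \/ (i = k1 /\ j = k0).
  by move: ij; case: (ord2 i) => ->; case: (ord2 j) => ->; auto.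
rewrite /L_omega big_mkcond big_bool /= !ifq !(post_val _ _ _ _ _ j) //.
have [-> ->] : prob_obs p i true = 1 - p i /\ prob_obs p i false = p i.
  by case: hij => [[-> _]|[-> _]]; rewrite ?qv_k0 ?qv_k1.
rewrite /Mv; ring.
Qed.

Theorem mainTheorem5 (R : realFieldType) (CF CR : R) (p : 'I_2 -> R) :
  0 < CF -> 0 <= CR -> CR <= CF / 2 ->
  (forall k, 0 <= p k <= 1) ->
  (forall i j : 'I_2, i != j ->
     L_omega phi_series CF (fun _ => CR) p i
     = p i * CR + Num.min CR (p j * CF)) /\
  ((forall k, p k <= CR / CF) ->
   forall i j : 'I_2, p j <= p i ->
     VoI_L phi_series CF (fun _ => CR) p j <= VoI_L phi_series CF (fun _ => CR) p i).
Proof.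
move=> hF hR hRF hp.
split=> [i j ij|hpt i j hji]; first exact: Lomega_val.
have [<-|ij] := eqVneq i j; first by rewrite lexx.
have ji : j != i by rewrite eq_sym.
rewrite /VoI_L lerD2l lerN2 (Lomega_val _ _ _ _ _ _ hF hR hRF hp ij) (Lomega_val _ _ _ _ _ _ hF hR hRF hp ji).
have hi : p i * CF <= CR by rewrite -ler_pdivlMr.
have hj : p j * CF <= CR by rewrite -ler_pdivlMr.
rewrite (min_r hi) (min_r hj).
move: (hp i) (hp j) => /andP[? ?] /andP[? ?].
nra.
Qed.
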